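(* Let $\mathtt{a}\in\Sigma$ and $p,q,k\in\mathbb{N}$ with $p,q,k\ge 1$. If $\mathtt{a}^p\equiv_{k+3}\mathtt{a}^q$, then $w^p\equiv_k w^q$ for every primitive word $w\in\Sigma^+$.
   Context: $\Sigma$ is a fixed finite alphabet. A word $w\in\Sigma^+$ is primitive if there is no $z\in\Sigma^*$ and $k>1$ with $w=z^k$. For $w \in \Sigma^*$, $\mathsf{Facs}(w)$ is the set of all factors (contiguous subwords, including $\varepsilon$ and $w$) of $w$. The structure $\mathfrak{A}_w$ representing $w$ has universe $\mathsf{Facs}(w)\cup\{\perp\}$, a ternary relation $R_\circ=\{(x,y,z)\in\mathsf{Facs}(w)^3 : x=y\cdot z\}$, for each letter $\mathtt{a}\in\Sigma$ a constant interpreted as $\mathtt{a}$ if $\mathtt{a}$ occurs in $w$ and as $\perp$ otherwise, and a constant $\varepsilon$ interpreted as the empty word. The $k$-round Ehrenfeucht–Fraïssé game on $\mathfrak{A}_w,\mathfrak{A}_v$: in each round $i$, Spoiler picks one of the two structures and an element of its universe, Duplicator answers with an element of the other structure's universe; let $a_i$ (in $\mathfrak{A}_w$) and $b_i$ (in $\mathfrak{A}_v$) be the chosen elements. Duplicator wins if the tuples $(a_1,\dots,a_k,\vec c^{\,\mathfrak{A}_w})$ and $(b_1,\dots,b_k,\vec c^{\,\mathfrak{A}_v})$, where $\vec c$ lists the interpretations of all constants, form a partial isomorphism: for all indices $i,j,l$, $a_i$ equals the interpretation of a constant $c$ iff $b_i$ equals the interpretation of $c$; $a_i=a_j$ iff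 $b_i=b_j$; and $a_i=a_j\cdot a_l$ iff $b_i=b_j\cdot b_l$. We write $w\equiv_k v$ if Duplicator has a winning strategy in the $k$-round game. *)

(* Defs.v *)
From mathcomp Require Import all_boot.
Set Implicit Arguments. Unset Strict Implicit. Unset Printing Implicit Defensive.

Definition wpow (Sigma : eqType) (w : seq Sigma) (n : nat) : seq Sigma :=
  flatten (nseq n w).

Definition primitive (Sigma : eqType) (w : seq Sigma) : Prop :=
  w <> [::] /\ forall (z : seq Sigma) (k : nat), 1 < k -> w <> wpow z k.

(* Elements of the structure A_w: [Some u] is the factor u, [None] is bottom. *)
Definition elt (Sigma : eqType) := option (seq Sigma).

Definition in_univ (Sigma : eqType) (w : seq Sigma) (x : elt Sigma) : bool :=
  match x with None => true | Some u => infix u w end.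

Definition Rcat (Sigma : eqType) (x y z : elt Sigma) : bool :=
  match x, y, z with
  | Some u, Some s, Some t => u == s ++ t
  | _, _, _ => false
  end.

Definition const_letter (Sigma : eqType) (w : seq Sigma) (c : Sigma) : elt Sigma :=
  if c \in w then Some [:: c] else None.

Definition consts (Sigma : finType) (w : seq Sigma) : seq (elt Sigma) :=
  Some [::] :: [seq const_letter w c | c <- enum Sigma].

Definition partial_iso (Sigma : finType) (w v : seq Sigma)
  (as_ bs : seq (elt Sigma)) : Prop :=
  let A := as_ ++ consts w in
  let B := bs ++ consts v in
  forall i j l : nat, i < size A -> j < size A -> l < size A ->
    ((nth None A i == nth None A j) = (nth None B i == nth None B j)) /\
    (Rcat (nth None A i) (nth None A j) (nth None A l) =
     Rcat (nth None B i) (nth None B j) (nth None B l)).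

(* Duplicator wins the remaining k-round game from position [pos]
   (list of pairs (a_i, b_i) chosen so far). *)
Fixpoint dup_wins (Sigma : finType) (w v : seq Sigma) (k : nat)
  (pos : seq (elt Sigma * elt Sigma)) : Prop :=
  match k with
  | 0 => partial_iso w v (map fst pos) (map snd pos)
  | k'.+1 =>
      (forall a, in_univ w a -> exists2 b, in_univ v b & dup_wins w v k' ((a, b) :: pos)) /\
      (forall b, in_univ v b -> exists2 a, in_univ w a & dup_wins w v k' ((a, b) :: pos))
  end.

Definition ef_equiv (Sigma : finType) (k : nat) (w v : seq Sigma) : Prop :=
  dup_wins w v k [::].

(* Main.v *)
Require Import Defs.
From mathcomp Require Import all_boot zify.
Set Implicit Arguments. Unset Strict Implicit. Unset Printing Implicit Defensive.

Definition W (S : eqType) (x0 : S) (w : seq S) (i : nat) : S := nth x0 w (i %% size w).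
Definition seg (S : eqType) (x0 : S) (w : seq S) (r L : nat) : seq S :=
  mkseq (fun i => W x0 w (r + i)) L.

Lemma size_seg (S : eqType) (x0 : S) w r L : size (seg x0 w r L) = L.
Proof. by rewrite size_mkseq. Qed.

Lemma nth_seg (S : eqType) (x0 y : S) w r L i : i < L -> nth y (seg x0 w r L) i = W x0 w (r + i).
Proof. by move=> h; rewrite nth_mkseq. Qed.

Lemma W_mod (S : eqType) (x0 : S) w i j : i = j %[mod size w] -> W x0 w i = W x0 w j.
Proof. by rewrite /W => ->. Qed.

Lemma seg_mod (S : eqType) (x0 : S) w r1 r2 L : r1 = r2 %[mod size w] ->
  seg x0 w r1 L = seg x0 w r2 L.
Proof.
move=> h; apply: eq_mkseq => i; apply: W_mod.
by rewrite -modnDml h modnDml.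
Qed.

Lemma take_seg (S : eqType) (x0 : S) w r L k : k <= L -> take k (seg x0 w r L) = seg x0 w r k.
Proof. by move=> h; rewrite /seg /mkseq -map_take take_iota (minn_idPl h). Qed.

Lemma drop_seg (S : eqType) (x0 : S) w r L k : drop k (seg x0 w r L) = seg x0 w (r + k) (L - k).
Proof.
rewrite /seg /mkseq -map_drop drop_iota add0n.
have -> : iota k (L - k) = map (addn k) (iota 0 (L - k)) by rewrite -iotaDl addn0.
rewrite -map_comp.
by apply: eq_map => i /=; rewrite addnA.
Qed.

Lemma wpowS (S : eqType) (w : seq S) p : wpow w p.+1 = w ++ wpow w p.
Proof. by []. Qed.

Lemma size_wpow (S : eqType) (w : seq S) p : size (wpow w p) = p * size w.
Proof. elim: p => [//|p IH]; by rewrite wpowS size_cat IH mulSn. Qed.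

Lemma nth_wpow (S : eqType) (x0 : S) w p i : i < p * size w -> nth x0 (wpow w p) i = W x0 w i.
Proof.
elim: p i => [//|p IH] i; rewrite mulSn => hi; rewrite wpowS nth_cat.
case: ltnP => h.
  by rewrite /W modn_small.
rewrite IH; last by lia.
apply: W_mod. by rewrite -{2}(subnK h) modnDr.
Qed.

Lemma infix_wpowP (S : eqType) (x0 : S) (w : seq S) p x : 0 < size w ->
  infix x (wpow w p) <-> exists2 r, r < size w & (r + size x <= p * size w /\ x = seg x0 w r (size x)).
Proof.
move=> n0; split.
  case/infixP=> s [s' E].
  have Hs: size (wpow w p) = size s + size x + size s' by rewrite E !size_cat addnA.
  exists (size s %% size w); first by rewrite ltn_mod.
  split.
    rewrite -size_wpow Hs. have := leq_mod (size s) (size w). lia.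
  rewrite (@seg_mod _ x0 w _ (size s)); last by rewrite modn_mod.
  apply: (@eq_from_nth _ x0); first by rewrite size_seg.
  move=> i hi; rewrite nth_seg // -(@nth_wpow _ x0 w p); last by rewrite -size_wpow Hs; lia.
  rewrite E nth_cat ifF; last by lia.
  by rewrite addKn nth_cat hi.
case=> r hr [hle ->].
apply: (@infix_trans _ (drop r (wpow w p))); last exact: infix_drop.

have -> : seg x0 w r (size x) = take (size x) (drop r (wpow w p)).
  apply: (@eq_from_nth _ x0).
    rewrite size_seg size_take size_drop size_wpow; case: ltnP; lia.
  move=> i; rewrite size_seg => hi.
  by rewrite nth_seg // nth_take // nth_drop nth_wpow //; lia.
exact: infix_take.
Qed.

Lemma W_addn (S : eqType) (x0 : S) w i c : W x0 w (i + c * size w) = W x0 w i.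
Proof. by apply: W_mod; rewrite addnC modnMDl. Qed.

Lemma nth_W (S : eqType) (x0 : S) w i : i < size w -> W x0 w i = nth x0 w i.
Proof. by move=> h; rewrite /W modn_small. Qed.

Lemma period_not_prim (S : eqType) (x0 : S) w d : 0 < d < size w ->
  (forall i, W x0 w (i + d) = W x0 w i) -> ~ primitive w.
Proof.
move=> /andP[d0 dn] Hp [_ Hpr].
set n := size w in dn Hp.
have Hdc : forall c i, W x0 w (i + d * c) = W x0 w i.
  elim=> [|c IH] i; first by rewrite muln0 addn0.
  by rewrite mulnS addnA addnC addnA Hp addnC IH.
set g := gcdn d n.
have [u _ hdv] := Bezoutl n d0.
have Hg : forall i, W x0 w (i + g) = W x0 w i.
  move=> i; rewrite -(W_addn x0 w (i + g) u) -addnA -(divnK hdv) mulnC.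
  exact: Hdc.
have Hgt : forall t i, W x0 w (i + g * t) = W x0 w i.
  elim=> [|t IH] i; first by rewrite muln0 addn0.
  by rewrite mulnS addnA addnC addnA Hg addnC IH.
have g0 : 0 < g by rewrite gcdn_gt0 d0.
have gd : g <= d by apply: dvdn_leq => //; exact: dvdn_gcdl.
have gn : g %| n by exact: dvdn_gcdr.
have Hmod : forall i, W x0 w i = W x0 w (i %% g).
  by move=> i; rewrite {1}(divn_eq i g) mulnC addnC Hgt.
apply: (Hpr (take g w) (n %/ g)).
  rewrite ltnNge; apply/negP => h.
  have : n <= g. rewrite -{1}(divnK gn). have := h; case: (n %/ g) => [|[|//]] _; lia.
  lia.
have szt : size (take g w) = g by rewrite size_take; case: ltnP; lia.
apply: (@eq_from_nth _ x0).
  by rewrite size_wpow szt divnK.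
move=> i hi; rewrite nth_wpow; last by rewrite szt divnK.
rewrite /W szt nth_take ?ltn_mod //.
have hg : i %% g < size w by have := ltn_pmod i g0; lia.
by rewrite -(nth_W x0 hi) -(nth_W x0 hg) -Hmod.
Qed.

Lemma prim_seg (S : eqType) (x0 : S) w r1 r2 : primitive w ->
  r1 < size w -> r2 < size w -> seg x0 w r1 (size w) = seg x0 w r2 (size w) -> r1 = r2.
Proof.
move=> Hpr.
wlog lt12 : r1 r2 / r1 <= r2.
  move=> H h1 h2 E; case: (leqP r1 r2) => h; first exact: H.
  by apply/esym; apply: H; [exact: ltnW|done|done|exact/esym].
move=> h1 h2 E; case: (ltngtP r1 r2) => // hlt; exfalso.
apply: (@period_not_prim _ x0 w (r2 - r1)); [|move=> i|exact: Hpr].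
  apply/andP; split; lia.
set n := size w.
have n0 : 0 < n by lia.
have Hs : forall j, j < n -> W x0 w (r1 + j) = W x0 w (r2 + j).
  move=> j hj; by rewrite -(nth_seg x0 x0 w r1 hj) E nth_seg.
set j := (i + n - r1) %% n.
have hj : j < n by rewrite ltn_mod.
have e1 : W x0 w i = W x0 w (r1 + j).
  apply: W_mod; rewrite modnDmr addnC subnK; last by lia.
  by rewrite modnDr.
have e2 : W x0 w (i + (r2 - r1)) = W x0 w (r2 + j).
  apply: W_mod; rewrite modnDmr.
  have -> : r2 + (i + n - r1) = (i + (r2 - r1)) + n by lia.
  by rewrite modnDr.
by rewrite e1 e2 Hs.
lia.
Qed.

Lemma lencond n mu eu ms es mt et : eu < n -> es < n -> et < n ->
 (mu*n+eu == ms*n+es + (mt*n+et)) =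
 (if es+et == eu then mu == ms+mt else if es+et == eu+n then mu == ms+mt+1 else false).
Proof.
move=> hu hs ht.
case: ifP => /eqP h1.
  apply/eqP/eqP => E; nia.
case: ifP => /eqP h2.
  apply/eqP/eqP => E; nia.
apply/eqP => E.
case: (ltngtP mu (ms+mt)) => c.
  have : mu * n + n <= (ms+mt) * n by rewrite addnC -mulSn leq_mul2r c orbT.
  lia.
  case: (ltngtP mu (ms+mt).+1) => c2.
  - lia.
  - have : (ms+mt).+2 * n <= mu * n by rewrite leq_mul2r c2 orbT.
    rewrite !mulSn; lia.
  - subst mu; rewrite mulSn in E; lia.
subst mu; lia.
Qed.

Definition SE (S : eqType) (x0 : S) (w : seq S) (r1 r2 m e : nat) : bool :=
  if m == 0 then seg x0 w r1 e == seg x0 w r2 e else r1 == r2.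

Lemma lin_uniq n m1 e1 m2 e2 : e1 < n -> e2 < n -> m1 * n + e1 = m2 * n + e2 -> m1 = m2 /\ e1 = e2.
Proof.
move=> h1 h2 E.
have n0 : 0 < n by lia.
have d1 : (m1 * n + e1) %/ n = m1 by rewrite divnMDl // divn_small // addn0.
have d2 : (m2 * n + e2) %/ n = m2 by rewrite divnMDl // divn_small // addn0.
have md1 : (m1 * n + e1) %% n = e1 by rewrite modnMDl modn_small.
have md2 : (m2 * n + e2) %% n = e2 by rewrite modnMDl modn_small.
by split; [rewrite -d1 E d2 | rewrite -md1 E md2].
Qed.

Lemma seg_eq_len (S : eqType) (x0 : S) w r1 r2 m e : primitive w ->
  r1 < size w -> r2 < size w -> e < size w ->
  (seg x0 w r1 (m * size w + e) == seg x0 w r2 (m * size w + e)) = SE x0 w r1 r2 m e.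
Proof.
move=> Hp h1 h2 he; rewrite /SE; case: (posnP m) => [->|m0]; first by rewrite mul0n add0n.

apply/eqP/eqP => [E|->//].
apply: (@prim_seg _ x0 w r1 r2 Hp h1 h2).
have hle : size w <= m * size w + e by nia.
by rewrite -(take_seg x0 w r1 hle) E take_seg.
Qed.

Lemma seg_eq (S : eqType) (x0 : S) w r1 r2 m1 e1 m2 e2 : primitive w ->
  r1 < size w -> r2 < size w -> e1 < size w -> e2 < size w ->
  (seg x0 w r1 (m1 * size w + e1) == seg x0 w r2 (m2 * size w + e2)) =
  [&& m1 == m2, e1 == e2 & SE x0 w r1 r2 m1 e1].
Proof.
move=> Hp h1 h2 he1 he2.
case: (boolP ((m1 == m2) && (e1 == e2))) => [/andP[/eqP <- /eqP <-]|H].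
  by rewrite !eqxx seg_eq_len.
rewrite andbA (negbTE H); apply/negbTE/negP => /eqP E.
have := congr1 size E; rewrite !size_seg => /(lin_uniq he1 he2) [E1 E2].
by move: H; rewrite E1 E2 !eqxx.
Qed.

Definition LC n mu eu ms es mt et :=
  if es+et == eu then mu == ms+mt else if es+et == eu+n then mu == ms+mt+1 else false.

Lemma seg_cat (S : eqType) (x0 : S) w ru rs rt mu eu ms es mt et : primitive w ->
  ru < size w -> rs < size w -> rt < size w -> eu < size w -> es < size w -> et < size w ->
  (seg x0 w ru (mu * size w + eu) == seg x0 w rs (ms * size w + es) ++ seg x0 w rt (mt * size w + et)) =
  [&& LC (size w) mu eu ms es mt et, SE x0 w ru rs ms es & SE x0 w ((ru + es) %% size w) rt mt et].
Proof.
move=> Hp hu hs ht heu hes het.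
set n := size w in hu hs ht heu hes het *.
have n0 : 0 < n by lia.
set Lu := mu * n + eu; set Ls := ms * n + es; set Lt := mt * n + et.
case: (boolP (Lu == Ls + Lt)) => HL; last first.
  rewrite /LC -lencond // -/Lu -/Ls -/Lt (negbTE HL) /=.
  apply/negbTE/negP => /eqP E; have := congr1 size E; rewrite size_cat !size_seg => E'.
  by rewrite E' eqxx in HL.
have HL' := HL; rewrite /LC -lencond // -/Lu -/Ls -/Lt in HL' *; rewrite HL /=.
move/eqP: HL => HL.
rewrite -{1}(cat_take_drop Ls (seg x0 w ru Lu)) eqseq_cat; last first.
  by rewrite size_take size_seg size_seg; case: ltnP; lia.
rewrite take_seg; last by lia.
rewrite drop_seg.
have -> : Lu - Ls = Lt by lia.
rewrite (@seg_mod _ x0 w (ru + Ls) ((ru + es) %% n)); last first.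
  by rewrite modn_mod /Ls -/n addnCA modnMDl.
by rewrite /Ls seg_eq_len // seg_eq_len // ltn_mod.
Qed.

Definition PP (S : finType) (w v : seq S) (pos : seq (elt S * elt S)) :=
  pos ++ zip (consts w) (consts v).

Definition iso_mem (S : finType) (w v : seq S) (pos : seq (elt S * elt S)) : Prop :=
  forall x y z, x \in PP w v pos -> y \in PP w v pos -> z \in PP w v pos ->
    ((x.1 == y.1) = (x.2 == y.2)) /\ (Rcat x.1 y.1 z.1 = Rcat x.2 y.2 z.2).

Lemma size_consts (S : finType) (w v : seq S) : size (consts w) = size (consts v).
Proof. by rewrite /consts /= !size_map. Qed.

Lemma mfz (A B : Type) (s : seq A) (t : seq B) : size s = size t -> map fst (zip s t) = s.
Proof. by elim: s t => [|x s IH] [|y t] //= [/IH ->]. Qed.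
Lemma msz (A B : Type) (s : seq A) (t : seq B) : size s = size t -> map snd (zip s t) = t.
Proof. by elim: s t => [|x s IH] [|y t] //= [/IH ->]. Qed.

Lemma map_fst_PP (S : finType) (w v : seq S) pos :
  map fst (PP w v pos) = map fst pos ++ consts w.
Proof. rewrite /PP map_cat; congr (_ ++ _); apply: mfz; exact: size_consts. Qed.

Lemma map_snd_PP (S : finType) (w v : seq S) pos :
  map snd (PP w v pos) = map snd pos ++ consts v.
Proof. rewrite /PP map_cat; congr (_ ++ _); apply: msz; exact: size_consts. Qed.

Lemma iso_memP (S : finType) (w v : seq S) pos :
  partial_iso w v (map fst pos) (map snd pos) <-> iso_mem w v pos.
Proof.
rewrite /partial_iso /iso_mem -(map_fst_PP w v) -(map_snd_PP w v) size_map.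
set P := PP w v pos.
have E1 : forall i, i < size P -> nth None (map fst P) i = (nth (None, None) P i).1.
  by move=> i hi; rewrite (nth_map (None, None)).
have E2 : forall i, i < size P -> nth None (map snd P) i = (nth (None, None) P i).2.
  by move=> i hi; rewrite (nth_map (None, None)).
split.
  move=> H x y z hx hy hz.
  have := H (index x P) (index y P) (index z P).
  rewrite !index_mem hx hy hz => /(_ isT isT isT).
  by rewrite !E1 ?index_mem // !E2 ?index_mem // !nth_index.
move=> H i j l hi hj hl.
by rewrite !E1 // !E2 //; apply: H; apply: mem_nth.
Qed.

Lemma PP_sub (S : finType) (w v : seq S) pos1 pos2 :
  {subset pos1 <= pos2} -> {subset PP w v pos1 <= PP w v pos2}.
Proof. by move=> hs x; rewrite !mem_cat => /orP[/hs ->|->]; rewrite ?orbT. Qed.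

Lemma iso_mem_sub (S : finType) (w v : seq S) pos1 pos2 :
  {subset pos1 <= pos2} -> iso_mem w v pos2 -> iso_mem w v pos1.
Proof.
move=> hs H x y z hx hy hz; apply: H; exact: (PP_sub hs).
Qed.

Lemma dup_wins_iso (S : finType) (w v : seq S) k pos :
  dup_wins w v k pos -> iso_mem w v pos.
Proof.
elim: k pos => [|k IH] pos /=; first by move/iso_memP.
case=> [H _]; have [b _ /IH] := H None isT.
apply: iso_mem_sub => x hx; by rewrite inE hx orbT.
Qed.

Definition swp (S : Type) (p : S * S) := (p.2, p.1).

Lemma swpK (S : Type) : involutive (@swp S).
Proof. by case. Qed.

Lemma map_swpK (S : Type) (s : seq (S * S)) : map (@swp S) (map (@swp S) s) = s.
Proof. by rewrite -map_comp (eq_map (@swpK S)) map_id. Qed.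

Lemma zip_swp (S : Type) (s t : seq S) : map (@swp S) (zip s t) = zip t s.
Proof. by elim: s t => [|x s IH] [|y t] //=; rewrite IH. Qed.

Lemma PP_swp (S : finType) (w v : seq S) pos :
  PP v w (map (@swp _) pos) = map (@swp _) (PP w v pos).
Proof. by rewrite /PP map_cat zip_swp. Qed.

Lemma mem_swp (S : eqType) (s : seq (S * S)) x : (swp x \in map (@swp S) s) = (x \in s).
Proof. by rewrite mem_map //; exact: (can_inj (@swpK S)). Qed.

Lemma iso_mem_swp (S : finType) (w v : seq S) pos :
  iso_mem w v pos -> iso_mem v w (map (@swp _) pos).
Proof.
move=> H x y z; rewrite PP_swp -(swpK x) -(swpK y) -(swpK z) !mem_swp => hx hy hz.
by have [-> ->] := H _ _ _ hx hy hz.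
Qed.

Lemma dup_wins_swp (S : finType) (w v : seq S) k pos :
  dup_wins w v k pos -> dup_wins v w k (map (@swp _) pos).
Proof.
elim: k pos => [|k IH] pos /=.
  by move/iso_memP/iso_mem_swp/iso_memP.
case=> [H1 H2]; split.
  by move=> b hb; have [a ha /IH] := H2 b hb; exists a.
by move=> a ha; have [b hb /IH] := H1 a ha; exists b.
Qed.

Lemma eps_PP (S : finType) (w v : seq S) pos : (Some [::], Some [::]) \in PP w v pos.
Proof. by rewrite mem_cat /consts /= inE eqxx orbT. Qed.

Lemma letter_PP (S : finType) (w v : seq S) pos c : c \in w -> c \in v ->
  (Some [:: c], Some [:: c]) \in PP w v pos.
Proof.
move=> hw hv; rewrite mem_cat /consts /= zip_map inE; apply/orP; right; apply/orP; right.
apply/mapP; exists c; first by rewrite mem_enum.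
by rewrite /const_letter hw hv.
Qed.

Lemma iso_Some (S : finType) (w v : seq S) pos x b :
  iso_mem w v pos -> (Some x, b) \in PP w v pos -> exists y, b = Some y.
Proof.
move=> H hx; have [_ R] := H _ _ _ hx (eps_PP w v pos) hx.
by case: b R hx => [y|] //=; [exists y | rewrite eqxx].
Qed.

Lemma mem_zip2 (A B : eqType) (s : seq A) (t : seq B) x y :
  (x, y) \in zip s t -> (x \in s) && (y \in t).
Proof.
elim: s t => [|a s IH] [|b t] //=; rewrite inE => /orP[/eqP [-> ->]|/IH /andP[h1 h2]].
  by rewrite !inE !eqxx.
by rewrite !inE h1 h2 !orbT.
Qed.

Lemma consts_univ (S : finType) (w : seq S) x : x \in consts w -> in_univ w x.
Proof.
rewrite /consts inE => /orP[/eqP ->|/mapP [c _ ->]] /=; first exact: infix0s.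
by rewrite /const_letter; case: ifP => //= h; rewrite infix1s.
Qed.

Definition univ2 (S : finType) (w v : seq S) (U : seq (elt S * elt S)) :=
  forall x, x \in U -> in_univ w x.1 && in_univ v x.2.

Lemma univ_PP (S : finType) (w v : seq S) U x : univ2 w v U -> x \in PP w v U ->
  in_univ w x.1 && in_univ v x.2.
Proof.
move=> H; rewrite mem_cat => /orP[/H //|]; case: x => x y /mem_zip2 /andP[h1 h2].
by rewrite /= !consts_univ.
Qed.

Lemma seg_unary (S : eqType) (a : S) r L : seg a [:: a] r L = nseq L a.
Proof.
apply: (@eq_from_nth _ a); first by rewrite size_seg size_nseq.
move=> i; rewrite size_seg => hi; rewrite nth_seg // nth_nseq hi /W /= modn1 //.
Qed.

Lemma infix_unary (S : eqType) (a : S) p x : infix x (wpow [:: a] p) ->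
  x = nseq (size x) a /\ size x <= p.
Proof.
move/(infix_wpowP a) => /= /(_ isT) [r hr [hle E]].
split; first by rewrite {1}E seg_unary.
by move: hle; rewrite muln1; lia.
Qed.

Lemma infix_unary2 (S : eqType) (a : S) p m : m <= p -> infix (nseq m a) (wpow [:: a] p).
Proof.
move=> h; apply/(infix_wpowP a) => //; exists 0 => //.
by rewrite size_nseq muln1 add0n seg_unary.
Qed.

Lemma mem_wpow (S : eqType) (w : seq S) p c : 0 < p -> (c \in wpow w p) = (c \in w).
Proof.
case: p => // p _; elim: p => [|p IH]; first by rewrite wpowS /wpow /= cats0.
by rewrite wpowS mem_cat IH orbb.
Qed.

Lemma eq_nseq2 (S : eqType) (a : S) m1 m2 : (nseq m1 a == nseq m2 a) = (m1 == m2).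
Proof.
apply/eqP/eqP => [E|->//]; by have := congr1 size E; rewrite !size_nseq.
Qed.

Lemma Rcat_nseq (S : eqType) (a : S) m1 m2 m3 :
  Rcat (Some (nseq m1 a)) (Some (nseq m2 a)) (Some (nseq m3 a)) = (m1 == m2 + m3).
Proof. by rewrite /= -nseqD eq_nseq2. Qed.

Definition UP (S : eqType) (a : S) (m m' : nat) : elt S * elt S :=
  (Some (nseq m a), Some (nseq m' a)).

Lemma u_eq (S : finType) (a : S) p q U m1 m1' m2 m2' :
  iso_mem (wpow [:: a] p) (wpow [:: a] q) U ->
  UP a m1 m1' \in PP (wpow [:: a] p) (wpow [:: a] q) U ->
  UP a m2 m2' \in PP (wpow [:: a] p) (wpow [:: a] q) U ->
  (m1 == m2) = (m1' == m2').
Proof.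
move=> H h1 h2; have [E _] := H _ _ _ h1 h2 h1; move: E => /=.
by rewrite !(inj_eq (@Some_inj _)) !eq_nseq2.
Qed.

Lemma u_zero (S : finType) (a : S) p q U m m' :
  iso_mem (wpow [:: a] p) (wpow [:: a] q) U ->
  UP a m m' \in PP (wpow [:: a] p) (wpow [:: a] q) U ->
  (m == 0) = (m' == 0).
Proof.
move=> H h; apply: (u_eq H h); exact: eps_PP.
Qed.

Lemma u_add (S : finType) (a : S) p q U m1 m1' m2 m2' m3 m3' :
  iso_mem (wpow [:: a] p) (wpow [:: a] q) U ->
  UP a m1 m1' \in PP (wpow [:: a] p) (wpow [:: a] q) U ->
  UP a m2 m2' \in PP (wpow [:: a] p) (wpow [:: a] q) U ->
  UP a m3 m3' \in PP (wpow [:: a] p) (wpow [:: a] q) U ->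
  (m1 == m2 + m3) = (m1' == m2' + m3').
Proof.
move=> H h1 h2 h3; have [_ E] := H _ _ _ h1 h2 h3; move: E => /=.
by rewrite -!nseqD !eq_nseq2.
Qed.

Lemma UP_bound (S : finType) (a : S) p q U m m' :
  univ2 (wpow [:: a] p) (wpow [:: a] q) U ->
  UP a m m' \in PP (wpow [:: a] p) (wpow [:: a] q) U -> m <= p /\ m' <= q.
Proof.
move=> H /(univ_PP H) /andP [/infix_unary [_ h1] /infix_unary [_ h2]].
by move: h1 h2; rewrite !size_nseq.
Qed.

Lemma u_succ (S : finType) (a : S) p q s U m m' : 0 < p -> 0 < q ->
  dup_wins (wpow [:: a] p) (wpow [:: a] q) s.+1 U ->
  univ2 (wpow [:: a] p) (wpow [:: a] q) U ->
  UP a m m' \in PP (wpow [:: a] p) (wpow [:: a] q) U -> m < p ->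
  [/\ m' < q, dup_wins (wpow [:: a] p) (wpow [:: a] q) s (UP a m.+1 m'.+1 :: U)
    & univ2 (wpow [:: a] p) (wpow [:: a] q) (UP a m.+1 m'.+1 :: U)].
Proof.
move=> p0 q0 [H _] HU hm hmp.
have [b hb Hd] := H (Some (nseq m.+1 a)) (infix_unary2 a hmp).
have Hi := dup_wins_iso Hd.
have hx : (Some (nseq m.+1 a), b) \in PP (wpow [:: a] p) (wpow [:: a] q) ((Some (nseq m.+1 a), b) :: U)
  by rewrite mem_cat inE eqxx.
have [y Ey] := iso_Some Hi hx; subst b.
have [Ey' hy] := infix_unary hb.
have hm2 : UP a m m' \in PP (wpow [:: a] p) (wpow [:: a] q) ((Some (nseq m.+1 a), Some y) :: U).
  by apply: (PP_sub _ hm) => z hz; rewrite inE hz orbT.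
have hl : (Some [:: a], Some [:: a]) \in PP (wpow [:: a] p) (wpow [:: a] q) ((Some (nseq m.+1 a), Some y) :: U).
  by apply: letter_PP; rewrite mem_wpow // inE.
have [_ R] := Hi _ _ _ hx hm2 hl.
have E1 : [:: a] = nseq 1 a by [].
rewrite E1 {1}Ey' !Rcat_nseq addn1 eqxx in R; move/esym/eqP: R => Es.
rewrite Es -nseqD size_nseq in hy; rewrite Es -nseqD addn1 in Hd.
split.
- lia.
- exact: Hd.
move=> z; rewrite inE => /orP[/eqP -> |/HU //].
by apply/andP; split; apply: infix_unary2; lia.
Qed.

Lemma u_add1_dir (S : finType) (a : S) p q s U m1 m1' m2 m2' m3 m3' : 0 < p -> 0 < q ->
  dup_wins (wpow [:: a] p) (wpow [:: a] q) s.+1 U ->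
  univ2 (wpow [:: a] p) (wpow [:: a] q) U ->
  UP a m1 m1' \in PP (wpow [:: a] p) (wpow [:: a] q) U ->
  UP a m2 m2' \in PP (wpow [:: a] p) (wpow [:: a] q) U ->
  UP a m3 m3' \in PP (wpow [:: a] p) (wpow [:: a] q) U ->
  m1 = m2 + m3 + 1 -> m1' = m2' + m3' + 1.
Proof.
move=> p0 q0 Hd HU h1 h2 h3 E.
have [b1 _] := UP_bound HU h1.
have [_ Hd2 _] := u_succ p0 q0 Hd HU h3 (ltac:(lia) : m3 < p).
have Hi := dup_wins_iso Hd2.
have sub : forall x, x \in PP (wpow [:: a] p) (wpow [:: a] q) U ->
    x \in PP (wpow [:: a] p) (wpow [:: a] q) (UP a m3.+1 m3'.+1 :: U).
  by apply: PP_sub => z hz; rewrite inE hz orbT.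
have h4 : UP a m3.+1 m3'.+1 \in PP (wpow [:: a] p) (wpow [:: a] q) (UP a m3.+1 m3'.+1 :: U)
  by rewrite mem_cat inE eqxx.
have := u_add Hi (sub _ h1) (sub _ h2) h4.
have -> : (m1 == m2 + m3.+1) = true by apply/eqP; lia.
move=> /esym/eqP; lia.
Qed.

Lemma univ2_swp (S : finType) (w v : seq S) U : univ2 w v U -> univ2 v w (map (@swp _) U).
Proof.
move=> H x; rewrite -(swpK x) mem_swp => /H /=; by rewrite andbC.
Qed.

Lemma UP_swp (S : finType) (w v : seq S) (a : S) U m m' :
  UP a m m' \in PP w v U -> UP a m' m \in PP v w (map (@swp _) U).
Proof. by rewrite PP_swp -mem_swp. Qed.

Lemma u_add1 (S : finType) (a : S) p q s U m1 m1' m2 m2' m3 m3' : 0 < p -> 0 < q ->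
  dup_wins (wpow [:: a] p) (wpow [:: a] q) s.+1 U ->
  univ2 (wpow [:: a] p) (wpow [:: a] q) U ->
  UP a m1 m1' \in PP (wpow [:: a] p) (wpow [:: a] q) U ->
  UP a m2 m2' \in PP (wpow [:: a] p) (wpow [:: a] q) U ->
  UP a m3 m3' \in PP (wpow [:: a] p) (wpow [:: a] q) U ->
  (m1 == m2 + m3 + 1) = (m1' == m2' + m3' + 1).
Proof.
move=> p0 q0 Hd HU h1 h2 h3; apply/eqP/eqP => E.
  exact: (u_add1_dir p0 q0 Hd HU h1 h2 h3 E).
exact: (u_add1_dir q0 p0 (dup_wins_swp Hd) (univ2_swp HU) (UP_swp h1) (UP_swp h2) (UP_swp h3) E).
Qed.

Definition RelW (S : finType) (a : S) (w : seq S) p q (U : seq (elt S * elt S)) (pi : elt S * elt S) : Prop :=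
  pi = (None, None) \/
  exists r e m m', [/\ r < size w, e < size w,
    pi = (Some (seg a w r (m * size w + e)), Some (seg a w r (m' * size w + e)))
    & UP a m m' \in PP (wpow [:: a] p) (wpow [:: a] q) U].

Definition Inv (S : finType) (a : S) (w : seq S) p q j (pos U : seq (elt S * elt S)) : Prop :=
  [/\ dup_wins (wpow [:: a] p) (wpow [:: a] q) (j + 3) U,
      univ2 (wpow [:: a] p) (wpow [:: a] q) U
    & forall pi, pi \in pos -> RelW a w p q U pi].

Lemma RelW_sub (S : finType) (a : S) w p q U U' pi : {subset U <= U'} ->
  RelW a w p q U pi -> RelW a w p q U' pi.
Proof.
move=> hs [->|[r [e [m [m' [h1 h2 h3 h4]]]]]]; [by left|right].
by exists r, e, m, m'; split => //; apply: (PP_sub hs).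
Qed.

Lemma RelW_swp (S : finType) (a : S) w p q U pi :
  RelW a w p q U pi -> RelW a w q p (map (@swp _) U) (swp pi).
Proof.
move=> [->|[r [e [m [m' [h1 h2 -> h4]]]]]]; [by left|right].
by exists r, e, m', m; split => //; apply: UP_swp.
Qed.

Lemma Inv_swp (S : finType) (a : S) w p q j pos U :
  Inv a w p q j pos U -> Inv a w q p j (map (@swp _) pos) (map (@swp _) U).
Proof.
case=> [H1 H2 H3]; split.
- exact: dup_wins_swp.
- exact: univ2_swp.
move=> pi; rewrite -(swpK pi) mem_swp => /H3; exact: RelW_swp.
Qed.

Lemma SE_m (S : eqType) (a : S) w r1 r2 m m' e : (m == 0) = (m' == 0) ->
  SE a w r1 r2 m e = SE a w r1 r2 m' e.
Proof. by rewrite /SE => ->. Qed.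

Lemma forth (S : finType) (a : S) w p q j pos U u : 0 < size w -> 0 < p -> 0 < q ->
  Inv a w p q j.+1 pos U -> in_univ (wpow w p) u ->
  exists2 v, in_univ (wpow w q) v & exists U', Inv a w p q j ((u, v) :: pos) U'.
Proof.
move=> n0 p0 q0 [Hd HU HR] hu.
have Hd' : dup_wins (wpow [:: a] p) (wpow [:: a] q) (j + 3).+1 U.
  by have -> : (j + 3).+1 = j.+1 + 3 by lia.
case: Hd' => [H1 _].
have HRs : forall U', {subset U <= U'} -> forall pi, pi \in pos -> RelW a w p q U' pi.
  by move=> U' hs pi /HR; apply: RelW_sub.
case: u hu => [x|] hu; last first.
  have [b hb Hb] := H1 None isT.
  exists None => //; exists ((None, b) :: U); split => //.
    by move=> z; rewrite inE => /orP[/eqP -> /=|/HU //].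
  move=> pi; rewrite inE => /orP[/eqP ->|]; first by left.
  by apply: HRs => z hz; rewrite inE hz orbT.
move: hu => /= /(infix_wpowP a p x n0) [r hr [hle Ex]].
set n := size w in n0 hr hle Ex *.
set m := size x %/ n; set e := size x %% n.
have hL : size x = m * n + e by rewrite /m /e -divn_eq.
have he : e < n by rewrite ltn_mod.
have hmp : m <= p.
  have : m * n <= p * n by lia.
  by rewrite leq_mul2r; case/orP => //; lia.
have [b hb Hb] := H1 (Some (nseq m a)) (infix_unary2 a hmp).
have Hi := dup_wins_iso Hb.
have [y Ey] := iso_Some Hi (ltac:(by rewrite mem_cat inE eqxx) :
   (Some (nseq m a), b) \in PP (wpow [:: a] p) (wpow [:: a] q) ((Some (nseq m a), b) :: U)).
subst b; have [Ey hyq] := infix_unary hb.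
set m' := size y in Ey hyq.
set U1 := UP a m m' :: U.
have HU1 : univ2 (wpow [:: a] p) (wpow [:: a] q) U1.
  move=> z; rewrite inE => /orP[/eqP -> /=|/HU //].
  by apply/andP; split; apply: infix_unary2.
have Hb1 : dup_wins (wpow [:: a] p) (wpow [:: a] q) (j + 3) U1 by rewrite /U1 /UP -Ey.
have hmem : UP a m m' \in PP (wpow [:: a] p) (wpow [:: a] q) U1 by rewrite mem_cat inE eqxx.
have Hbound : r + (m' * n + e) <= q * n.
  case: (posnP (r + e)) => hre.
    have : m' * n <= q * n by rewrite leq_mul2r hyq orbT.
    lia.
  case: (leqP (r + e) n) => hre2.
    have hmp' : m < p.
      rewrite ltnNge; apply/negP => hpm.
      have : p * n <= m * n by rewrite leq_mul2r hpm orbT.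
      lia.
    have Hd1 : dup_wins (wpow [:: a] p) (wpow [:: a] q) (j + 2).+1 U1.
      by have -> : (j + 2).+1 = j + 3 by lia.
    have [hq _ _] := u_succ p0 q0 Hd1 HU1 hmem hmp'.
    have : m'.+1 * n <= q * n by rewrite leq_mul2r hq orbT.
    rewrite mulSn; lia.
  have hmp' : m.+1 < p.
    rewrite ltnNge; apply/negP => hpm.
    have : p * n <= m.+1 * n by rewrite leq_mul2r hpm orbT.
    rewrite mulSn; lia.
  have Hd1 : dup_wins (wpow [:: a] p) (wpow [:: a] q) (j + 1).+2 U1.
    by have -> : (j + 1).+2 = j + 3 by lia.
  have [hq Hd2 HU2] := u_succ p0 q0 Hd1 HU1 hmem (ltnW hmp').
  have hmem2 : UP a m.+1 m'.+1 \in PP (wpow [:: a] p) (wpow [:: a] q) (UP a m.+1 m'.+1 :: U1)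
    by rewrite mem_cat inE eqxx.
  have [hq2 _ _] := u_succ p0 q0 Hd2 HU2 hmem2 hmp'.
  have : m'.+2 * n <= q * n by rewrite leq_mul2r hq2 orbT.
  rewrite !mulSn; lia.
exists (Some (seg a w r (m' * n + e))).
  apply/(infix_wpowP a) => //; exists r => //; by rewrite size_seg.
exists U1; split => //.
move=> pi; rewrite inE => /orP[/eqP ->|]; last by apply: HRs => z hz; rewrite inE hz orbT.
right; exists r, e, m, m'; split => //.
by rewrite {1}Ex hL.
Qed.

Lemma seg_one (S : eqType) (a : S) w c : c \in w -> seg a w (index c w) 1 = [:: c].
Proof.
move=> h; rewrite /seg /mkseq /= /W addn0 modn_small ?index_mem //.
by rewrite nth_index.
Qed.

Lemma RelW_consts (S : finType) (a : S) w p q U pi : 0 < size w -> 0 < p -> 0 < q ->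
  pi \in zip (consts (wpow w p)) (consts (wpow w q)) -> RelW a w p q U pi.
Proof.
move=> n0 p0 q0; rewrite /consts /= zip_map inE => /orP[/eqP ->|/mapP [c _ ->]].
  right; exists 0, 0, 0, 0; split => //; exact: (eps_PP (wpow [:: a] p) (wpow [:: a] q) U).
rewrite /const_letter !mem_wpow //.
case: ifP => hc; last by left.
right; have hr : index c w < size w by rewrite index_mem.
case: (ltngtP (size w) 1) => hn; first lia.
  exists (index c w), 1, 0, 0; split => //.
  - by rewrite mul0n add0n seg_one.
  - exact: (eps_PP (wpow [:: a] p) (wpow [:: a] q) U).
exists (index c w), 0, 1, 1; split => //.
- by rewrite hn mul1n addn0 seg_one.
by apply: letter_PP; rewrite mem_wpow // inE.
Qed.

Lemma final (S : finType) (a : S) w p q pos U : primitive w -> 0 < p -> 0 < q ->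
  Inv a w p q 0 pos U -> partial_iso (wpow w p) (wpow w q) (map fst pos) (map snd pos).
Proof.
move=> Hp p0 q0 [Hd HU HR].
have n0 : 0 < size w by case: Hp => h _; case: (w) h.
apply/iso_memP.
have HRall : forall pi, pi \in PP (wpow w p) (wpow w q) pos -> RelW a w p q U pi.
  move=> pi; rewrite mem_cat => /orP[/HR //|]; exact: RelW_consts.
have Hi := dup_wins_iso Hd.
move=> x y z /HRall hx /HRall hy /HRall hz.
case: hx => [->|[r1 [e1 [m1 [m1' [h1 he1 -> hm1]]]]]].
  split; last by [].
  by case: hy => [->|[? [? [? [? [_ _ -> _]]]]]].
case: hy => [->|[r2 [e2 [m2 [m2' [h2 he2 -> hm2]]]]]].
  by split => //=; case: z hz => [[?|] [?|]].
have Z1 := u_zero Hi hm1; have Z2 := u_zero Hi hm2.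
split.
  rewrite /= !(inj_eq (@Some_inj _)) !seg_eq //.
  by rewrite (u_eq Hi hm1 hm2) (SE_m _ _ _ _ _ Z1).
case: hz => [->|[r3 [e3 [m3 [m3' [h3 he3 -> hm3]]]]]]; first by [].
have Z3 := u_zero Hi hm3.
rewrite /= !seg_cat // ?ltn_mod //.
rewrite (SE_m _ _ _ _ _ Z2) (SE_m _ _ _ _ _ Z3).
rewrite /LC (u_add Hi hm1 hm2 hm3).
by rewrite (u_add1 p0 q0 (Hd : dup_wins _ _ 2.+1 U) HU hm1 hm2 hm3).
Qed.

Lemma main (S : finType) (a : S) w j : primitive w ->
  forall p q pos U, 0 < p -> 0 < q ->
  Inv a w p q j pos U -> dup_wins (wpow w p) (wpow w q) j pos.
Proof.
move=> Hp; have n0 : 0 < size w by case: Hp => h _; case: (w) h.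
elim: j => [|j IH] p q pos U p0 q0 HI; first exact: final HI.
split.
  move=> u hu; have [v hv [U' HI']] := forth n0 p0 q0 HI hu.
  exists v => //; exact: IH HI'.
move=> v hv.
have [u hu [U' HI']] := forth n0 q0 p0 (Inv_swp HI) hv.
exists u => //.
have := IH _ _ _ _ p0 q0 (Inv_swp HI').
by rewrite /= map_swpK.
Qed.

Theorem lemma4p8 (Sigma : finType) (a : Sigma) (p q k : nat) :
  1 <= p -> 1 <= q -> 1 <= k ->
  ef_equiv (k + 3) (wpow [:: a] p) (wpow [:: a] q) ->
  forall w : seq Sigma, primitive w -> ef_equiv k (wpow w p) (wpow w q).
Proof.
move=> p0 q0 _ H w Hp.
apply: (@main _ a w k Hp p q [::] [::] p0 q0).
by split => // z.
Qed.
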